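(* Let $F$ be a free non-abelian group and let $\mathcal K$ be the class of coordinate groups $F_{R(U)}$ of finite systems $U(X)=1$ over $F$ such that every equation $T(X,Y)=1$ over $F$ compatible with $U=1$ admits a $U$-lift. Let $G=F_{R(S)}\in\mathcal K$ and let $H$ be a finitely generated subgroup of $G$ with $F\le H$ such that there is a retraction $\phi:G\to H$ (a homomorphism with $\phi|_H=\mathrm{id}_H$). Then $H=F_{R(U)}$ for some finite system $U=1$ over $F$ and every equation compatible with $U=1$ admits a $U$-lift; in particular $H\in\mathcal K$.
   Context: $F[X]=F*F(X)$; $R(U)$ is the intersection of kernels of all $F$-homomorphisms $F[X]\to F$ killing $U$; $F_{R(U)}=F[X]/R(U)$ with canonical map $\mu:X\to F_{R(U)}$. $T(X,Y)=1$ is compatible with $U=1$ if for every solution $X_0$ of $U=1$ in $F$, $T(X_0,Y)=1$ has a solution in $F$; it admits a $U$-lift if $T(X^\mu,Y)=1$ has a solution in $F_{R(U)}$. *)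

(* Defs.v *)
(* Free groups are modelled concretely by words over letters
   (generator, inverted?) up to free reduction. *)
From mathcomp Require Import all_boot.
Set Implicit Arguments. Unset Strict Implicit. Unset Printing Implicit Defensive.

(* A word over a set V of generators: letters (v, b), b = true means v^-1. *)
Definition word (V : Type) := seq (V * bool).

Definition inv_word (V : Type) (w : word V) : word V :=
  rev (map (fun l => (l.1, ~~ l.2)) w).

Definition push (V : eqType) (l : V * bool) (s : word V) : word V :=
  match s with
  | l' :: s' => if (l'.1 == l.1) && (l'.2 == ~~ l.2) then s' else l :: s
  | [::] => [:: l]
  end.

(* the freely reduced form; two words are equal in the free group on V iff
   their reduced forms coincide *)
Definition reduce (V : eqType) (w : word V) : word V := foldr (@push V) [::] w.

Definition wsubst (V W : Type) (f : V -> word W) (w : word V) : word W :=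
  flatten (map (fun l => if l.2 then inv_word (f l.1) else f l.1) w).

(* F = free group on A;  F[X] = F * F(X) = free group on A + X. *)
Definition cst (A V : Type) (a : A) : word (A + V) := [:: (inl a, false)].

Definition fsub (A V W : Type) (f : V -> word (A + W)) : word (A + V) -> word (A + W) :=
  wsubst (fun c => match c with inl a => [:: (inl a, false)] | inr v => f v end).

Definition eval (A V : Type) (s : V -> word A) : word (A + V) -> word A :=
  wsubst (fun c => match c with inl a => [:: (a, false)] | inr v => s v end).

Definition is_solution (A : eqType) (V : eqType) (U : seq (word (A + V)))
  (s : V -> word A) : Prop :=
  forall u, u \in U -> reduce (eval s u) = [::].

Definition inR (A : eqType) (V : eqType) (U : seq (word (A + V))) (w : word (A + V)) : Prop :=
  forall s, is_solution U s -> reduce (eval s w) = [::].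

(* equality in F_{R(U)} = F[V]/R(U) *)
Definition eqR (A : eqType) (V : eqType) (U : seq (word (A + V))) (w w' : word (A + V)) : Prop :=
  inR U (w ++ inv_word w').

Definition pairmap (A X Y : Type) (s : X -> word A) (t : Y -> word A) : X + Y -> word A :=
  fun c => match c with inl x => s x | inr y => t y end.

Definition compatible (A : eqType) (n m : nat) (U : seq (word (A + 'I_n)))
  (T : word (A + ('I_n + 'I_m))) : Prop :=
  forall s : 'I_n -> word A, is_solution U s ->
    exists t : 'I_m -> word A, reduce (eval (pairmap s t) T) = [::].

(* T(X^mu, Y) = 1 has a solution in F_{R(U)}: Y := W (representatives in F[X]) *)
Definition admits_lift (A : eqType) (n m : nat) (U : seq (word (A + 'I_n)))
  (T : word (A + ('I_n + 'I_m))) : Prop :=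
  exists W : 'I_m -> word (A + 'I_n),
    inR U (fsub (fun c => match c with
                          | inl i => [:: (inr i, false)]
                          | inr j => W j end) T).

Definition lift_property (A : eqType) (n : nat) (U : seq (word (A + 'I_n))) : Prop :=
  forall m (T : word (A + ('I_n + 'I_m))), compatible U T -> admits_lift U T.

Definition inH (A : eqType) (V : eqType) (S : seq (word (A + V))) (k : nat)
  (g : 'I_k -> word (A + V)) (w : word (A + V)) : Prop :=
  exists v : word 'I_k, eqR S (wsubst g v) w.

(* phi (given on the generators A + X of F_{R(S)}) defines a homomorphism
   F_{R(S)} -> H which is the identity on H *)
Definition is_retraction (A : eqType) (n k : nat) (S : seq (word (A + 'I_n)))
  (g : 'I_k -> word (A + 'I_n)) (phi : A + 'I_n -> word (A + 'I_n)) : Prop :=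
  [/\ (forall w, inR S w -> inR S (wsubst phi w)),
      (forall c, inH S g (phi c)) &
      (forall w, inH S g w -> eqR S (wsubst phi w) w)].

(* alpha (on the variables of F[X_l]) induces an F-isomorphism F_{R(U)} -> H *)
Definition F_iso_onto_H (A : eqType) (n k l : nat) (S : seq (word (A + 'I_n)))
  (g : 'I_k -> word (A + 'I_n)) (U : seq (word (A + 'I_l)))
  (alpha : 'I_l -> word (A + 'I_n)) : Prop :=
  [/\ (forall i, inH S g (alpha i)),
      (forall w, inR U w -> inR S (fsub alpha w)),
      (forall w, inR S (fsub alpha w) -> inR U w) &
      (forall h, inH S g h -> exists w, eqR S (fsub alpha w) h)].

(* Main.v *)
Require Import Defs.
From mathcomp Require Import all_boot.
Set Implicit Arguments. Unset Strict Implicit. Unset Printing Implicit Defensive.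

Definition linv (V : Type) (l : V * bool) := (l.1, ~~ l.2).

Fixpoint red (V : eqType) (s : word V) : bool :=
  match s with
  | l :: s' => match s' with
              | l' :: _ => ~~ ((l'.1 == l.1) && (l'.2 == ~~ l.2)) && red s'
              | [::] => true end
  | [::] => true end.

Lemma red_tail (V : eqType) (l : V * bool) s : red (l :: s) -> red s.
Proof. by case: s => //= l' s' /andP[]. Qed.

Lemma push_red (V : eqType) (l : V * bool) s : red s -> red (push l s).
Proof.
case: s => [|l' s'] //= Hs.
case: ifP => C; first exact: red_tail Hs.
by rewrite /= C Hs.
Qed.

Lemma push_inv (V : eqType) (l : V * bool) s : red s -> push (linv l) (push l s) = s.
Proof.
case: l => v b; case: s => [|[v' b'] s'] /=.
  by rewrite eqxx negbK eqxx.
case: (v' =P v) => [->|ne] /=; last first.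
  by move=> _; rewrite eqxx negbK eqxx.
case: (b' =P ~~ b) => [->|ne2] /=; last first.
  by move=> _; rewrite eqxx negbK eqxx.
case: s' => [|[v'' b''] s''] //= /andP[C _].
by rewrite (negbTE C).
Qed.

Lemma foldr_red (V : eqType) (r u : word V) : red r -> red (foldr (@push V) r u).
Proof. by move=> Hr; elim: u => //= l u IH; apply: push_red. Qed.

Lemma reduce_red (V : eqType) (w : word V) : red (reduce w).
Proof. exact: foldr_red. Qed.

Lemma Fpush (V : eqType) (l : V * bool) (u r : word V) : red r ->
  foldr (@push V) r (push l u) = push l (foldr (@push V) r u).
Proof.
move=> Hr; case: u => [|l' u'] //=.
case: ifP => C //=.
have -> : l = linv l'.
  case: l l' C => v b [v' b'] /= /andP[/eqP-> /eqP->]; by rewrite /linv /= negbK.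
by rewrite push_inv // foldr_red.
Qed.

Lemma Fred (V : eqType) (x r : word V) : red r ->
  foldr (@push V) r x = foldr (@push V) r (reduce x).
Proof.
move=> Hr; elim: x => //= l x IH.
by rewrite IH Fpush.
Qed.

Lemma cat_congr (V : eqType) (x x' y y' : word V) :
  reduce x = reduce x' -> reduce y = reduce y' -> reduce (x ++ y) = reduce (x' ++ y').
Proof.
move=> Hx Hy; rewrite /reduce !foldr_cat -/(reduce y) -/(reduce y') Hy.
by rewrite (Fred x (reduce_red y')) (Fred x' (reduce_red y')) -/(reduce x) Hx.
Qed.

Lemma inv_word_cat (V : Type) (x y : word V) : inv_word (x ++ y) = inv_word y ++ inv_word x.
Proof. by rewrite /inv_word map_cat rev_cat. Qed.

Lemma inv_wordK (V : Type) (x : word V) : inv_word (inv_word x) = x.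
Proof.
rewrite /inv_word map_rev revK -map_comp; elim: x => //= [[v b] x] IH.
by rewrite negbK IH.
Qed.

Lemma inv_word_cons (V : Type) (l : V * bool) x : inv_word (l :: x) = inv_word x ++ [:: linv l].
Proof. by rewrite -cat1s inv_word_cat. Qed.

Lemma cancel_r (V : eqType) (x : word V) : reduce (x ++ inv_word x) = [::].
Proof.
elim: x => // l x IH.
rewrite inv_word_cons /= catA.
rewrite (@cat_congr _ _ [::] [:: linv l] [:: linv l]) //=.
case: l => v b /=; by rewrite eqxx eqxx.
Qed.

Lemma cancel_l (V : eqType) (x : word V) : reduce (inv_word x ++ x) = [::].
Proof. by rewrite -{2}(inv_wordK x) cancel_r. Qed.

Lemma inv_congr (V : eqType) (x x' : word V) :
  reduce x = reduce x' -> reduce (inv_word x) = reduce (inv_word x').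
Proof.
move=> H.
rewrite -[inv_word x]cats0.
transitivity (reduce (inv_word x ++ (x' ++ inv_word x'))).
  by apply: cat_congr => //; rewrite cancel_r.
rewrite catA (@cat_congr _ _ [::] (inv_word x') (inv_word x')) //.
by rewrite -(@cat_congr _ (inv_word x) _ x) ?cancel_l.
Qed.

Lemma eq_of_cancel (V : eqType) (x y : word V) :
  reduce (x ++ inv_word y) = [::] -> reduce x = reduce y.
Proof.
move=> H; rewrite -[x]cats0.
rewrite (@cat_congr _ _ x _ (inv_word y ++ y)) //; last by rewrite cancel_l.
by rewrite catA (@cat_congr _ _ [::] y y).
Qed.

Lemma eq_of_cancel_l (V : eqType) (x y : word V) :
  reduce (inv_word x ++ y) = [::] -> reduce x = reduce y.
Proof.
move=> H; rewrite -[y]cat0s.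
rewrite -(@cat_congr _ (x ++ inv_word x) [::] y y) ?cancel_r //.
by rewrite -catA (@cat_congr _ x x _ [::]) ?cats0.
Qed.

Lemma cancel_of_eq (V : eqType) (x y : word V) :
  reduce x = reduce y -> reduce (x ++ inv_word y) = [::].
Proof. by move=> H; rewrite (@cat_congr _ _ y _ (inv_word y)) ?cancel_r. Qed.

Lemma cancel_of_eq_l (V : eqType) (x y : word V) :
  reduce y = reduce x -> reduce (inv_word x ++ y) = [::].
Proof. by move=> H; rewrite (@cat_congr _ _ (inv_word x) _ x) ?cancel_l. Qed.

Lemma wsubst_cons (V W : Type) (f : V -> word W) l w :
  wsubst f (l :: w) = (if l.2 then inv_word (f l.1) else f l.1) ++ wsubst f w.
Proof. by []. Qed.

Lemma wsubst1 (V W : Type) (f : V -> word W) l :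
  wsubst f [:: l] = if l.2 then inv_word (f l.1) else f l.1.
Proof. by rewrite /wsubst /= cats0. Qed.

Lemma wsubst_cat (V W : Type) (f : V -> word W) x y :
  wsubst f (x ++ y) = wsubst f x ++ wsubst f y.
Proof. by rewrite /wsubst map_cat flatten_cat. Qed.

Lemma wsubst_inv (V W : Type) (f : V -> word W) x :
  wsubst f (inv_word x) = inv_word (wsubst f x).
Proof.
elim: x => // l x IH.
rewrite inv_word_cons wsubst_cat IH wsubst_cons inv_word_cat; congr (_ ++ _).
case: l => v [] /=; by rewrite cats0 ?inv_wordK.
Qed.

Lemma wsubst_comp (V W Z : Type) (f : V -> word W) (h : W -> word Z) w :
  wsubst h (wsubst f w) = wsubst (fun c => wsubst h (f c)) w.
Proof.
elim: w => // l w IH.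
rewrite wsubst_cons wsubst_cat IH wsubst_cons; congr (_ ++ _).
by case: l => v [] //=; rewrite wsubst_inv.
Qed.

Lemma wsubst_congr (V : Type) (W : eqType) (f f' : V -> word W) w :
  (forall c, reduce (f c) = reduce (f' c)) -> reduce (wsubst f w) = reduce (wsubst f' w).
Proof.
move=> H; elim: w => // l w IH.
rewrite !wsubst_cons; apply: cat_congr => //.
by case: l.2; [apply: inv_congr|].
Qed.

Lemma eval_fsub (A : eqType) (V W : Type) (s : W -> word A) (f : V -> word (A + W)) w :
  reduce (eval s (fsub f w)) = reduce (eval (fun v => eval s (f v)) w).
Proof.
rewrite /eval /fsub wsubst_comp; apply: wsubst_congr; by case.
Qed.

Theorem mainTheorem14 (A : eqType) (a1 a2 : A) (Hneq : a1 != a2)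
  (n : nat) (S : seq (word (A + 'I_n))) (HS : lift_property S)
  (k : nat) (g : 'I_k -> word (A + 'I_n))
  (HF : forall a : A, inH S g (cst _ a))
  (phi : A + 'I_n -> word (A + 'I_n)) (Hphi : is_retraction S g phi) :
  exists (l : nat) (U : seq (word (A + 'I_l))) (alpha : 'I_l -> word (A + 'I_n)),
    F_iso_onto_H S g U alpha /\ lift_property U.
Proof.
case: Hphi => Hp1 Hp2 Hp3.
pose alpha := fun i : 'I_n => phi (inr i).
pose U := S ++ [seq ([:: (inr i, true)] ++ alpha i) | i <- enum 'I_n].
have eqRsem : forall w w' s, eqR S w w' -> is_solution S s ->
    reduce (eval s w) = reduce (eval s w').
  move=> w w' s E Hs; apply: eq_of_cancel; have := E s Hs.
  by rewrite /eval wsubst_cat wsubst_inv.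
have key_const : forall s a, is_solution S s ->
    reduce (eval s (phi (inl a))) = [:: (a, false)].
  move=> s a Hs; have := eqRsem _ _ s (Hp3 _ (HF a)) Hs.
  by rewrite /cst /wsubst /= cats0.
have key2 : forall s w, is_solution S s ->
    reduce (eval s (wsubst phi w)) = reduce (eval s (fsub alpha w)).
  move=> s w Hs; rewrite /eval /fsub !wsubst_comp; apply: wsubst_congr.
  case=> [a|i] //=.
  by have := key_const s a Hs; rewrite /eval => ->.
have key3 : forall s h, is_solution S s -> inH S g h ->
    reduce (eval s (fsub alpha h)) = reduce (eval s h).
  move=> s h Hs Hh; rewrite -key2 //; exact: eqRsem (Hp3 _ Hh) Hs.
pose ts := fun (s : 'I_n -> word A) (i : 'I_n) => eval s (alpha i).
have inRS : forall u, u \in S -> inR S u by move=> u uS s' Hs'; exact: Hs' u uS.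
have tsol : forall s, is_solution S s -> is_solution S (ts s).
  move=> s Hs u uS; rewrite /ts -eval_fsub -key2 //; exact: Hp1 _ (inRS _ uS) _ Hs.
have fixpt : forall s i, is_solution S s -> reduce (eval (ts s) (alpha i)) = reduce (ts s i).
  move=> s i Hs; rewrite /ts -eval_fsub key3 //; exact: Hp2.
have solU_t : forall s, is_solution S s -> is_solution U (ts s).
  move=> s Hs u; rewrite mem_cat => /orP[uS | /mapP[i _ ->]]; first exact: tsol.
  rewrite /eval wsubst_cat wsubst1 /=; apply: cancel_of_eq_l; exact: fixpt.
have solU_S : forall s, is_solution U s -> is_solution S s.
  by move=> s Hs u uS; apply: Hs; rewrite mem_cat uS.
have solU_fix : forall s i, is_solution U s -> reduce (s i) = reduce (eval s (alpha i)).
  move=> s i Hs; apply: eq_of_cancel_l.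
  have := Hs ([:: (inr i, true)] ++ alpha i).
  rewrite /eval wsubst_cat wsubst1 /=; apply.
  by rewrite mem_cat; apply/orP; right; apply/mapP; exists i; rewrite ?mem_enum.
have congrU : forall s (w : word (A + 'I_n)), is_solution U s ->
    reduce (eval s w) = reduce (eval (ts s) w).
  move=> s w Hs; rewrite /eval; apply: wsubst_congr; case=> // i; exact: solU_fix.
exists n, U, alpha; split.
  split.
  - by move=> i; exact: Hp2.
  - move=> w Hw s Hs; rewrite eval_fsub; exact: Hw _ (solU_t _ Hs).
  - move=> w Hw s Hs; rewrite congrU // /ts -eval_fsub; exact: Hw _ (solU_S _ Hs).
  - move=> h Hh; exists h => s Hs; rewrite /eval wsubst_cat wsubst_inv.
    apply: cancel_of_eq; exact: key3.
move=> m T Hc.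
pose beta := fun c : 'I_n + 'I_m => match c with
  | inl i => fsub (fun i' : 'I_n => [:: (@inr A ('I_n + 'I_m) (inl i'), false)]) (alpha i)
  | inr j => [:: (@inr A ('I_n + 'I_m) (inr j), false)] end.
pose T' := fsub beta T.
have Tev : forall (s : 'I_n -> word A) (t : 'I_m -> word A), reduce (eval (Defs.pairmap s t) T') = reduce (eval (Defs.pairmap (ts s) t) T).
  move=> s t; rewrite /T' eval_fsub /eval; apply: wsubst_congr.
  case=> [a|[i|j]] //=; last by rewrite wsubst1.
  change (reduce (eval (Defs.pairmap s t) (fsub (fun i' : 'I_n => [:: (@inr A ('I_n + 'I_m) (inl i'), false)]) (alpha i))) = reduce (ts s i)).
  rewrite eval_fsub /ts /eval; apply: wsubst_congr.
  by case=> [a|i'] //=; rewrite wsubst1.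
have HT'c : compatible S T'.
  move=> s Hs; have [t Ht] := Hc _ (solU_t s Hs); exists t; by rewrite Tev.
have [W HW] := HS _ _ HT'c.
exists W => s Hs.
have HsS := solU_S _ Hs.
pose q := fun j => eval s (W j).
have E1 : forall X : word (A + ('I_n + 'I_m)),
    reduce (eval s (fsub (fun c => match c with
                          | inl i => [:: (inr i, false)]
                          | inr j => W j end) X)) = reduce (eval (Defs.pairmap s q) X).
  move=> X; rewrite eval_fsub /eval; apply: wsubst_congr.
  by case=> [a|[i|j]] //=; rewrite wsubst1.
have := HW s HsS; rewrite E1 Tev E1 => <-.
rewrite /eval; apply: wsubst_congr; case=> [a|[i|j]] //=.
exact: solU_fix.
Qed.
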